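(* Assume the ground-truth assumption holds for $f^*$, $\mathcal K$ and $K$. Then for any $f_{\mathrm{teacher}}\in\mathcal H$, any $T>0$ and any integer $S\ge K$, the predictor $f_T=\mathcal T^{\mathcal K}_T(f_{\mathrm{teacher}})$ satisfies $$\mathcal L(f_T)\ \le\ \mathcal L(f_{\mathrm{teacher}})+\frac{e^{-\lambda_KT}}{2-e^{-\lambda_KT}}\|f^*\|_{\mathcal D}^2-\big(1-\lambda_{S+1}^2T^2\big)\sum_{k\ge S+1}\langle f_{\mathrm{teacher}},e_k\rangle_{\mathcal D}^2 .$$
   Context: $\mathcal D$ is a probability distribution on an input space $\mathcal X$; $\langle f,g\rangle_{\mathcal D}=\mathbb E_{x\sim\mathcal D}[f(x)g(x)]$, $\|f\|_{\mathcal D}^2=\langle f,f\rangle_{\mathcal D}$. For a target $f^*\in L^2(\mathcal D)$, $\mathcal L(f)=\mathbb E_{x\sim\mathcal D}[(f(x)-f^*(x))^2]$. $\mathcal K$ is a p.s.d. kernel with $\mathcal K(x,x')=\sum_{k\ge1}\lambda_ke_k(x)e_k(x')$, $\lambda_1\ge\lambda_2\ge\dots\ge0$, $\langle e_i,e_j\rangle_{\mathcal D}=\delta_{ij}$; $\mathcal H$ is the closed span of $\{e_k\}$ in $L^2(\mathcal D)$, and $f^*\in\mathcal H$. For $f\in\mathcal H$, $\mathcal T^{\mathcal K}_t(f)=\sum_k(1-e^{-\lambda_kt})\langle f,e_k\rangle_{\mathcal D}e_k$. Ground-truth assumption (for a positive integer $K$): $\langle f^*,e_k\rangle_{\mathcal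 D}=0$ for all $k>K$, and $\langle f^*,e_k\rangle_{\mathcal D}=0$ for every $k\le K$ with $\lambda_k=0$. *)

(* Defs.v *)
From mathcomp Require Import all_boot all_order all_algebra.
From mathcomp Require Import all_classical all_reals all_analysis.
Set Implicit Arguments. Unset Strict Implicit. Unset Printing Implicit Defensive.
Import Order.TTheory GRing.Theory Num.Theory.
Local Open Scope ring_scope.
Local Open Scope classical_set_scope.

Section defs.
Context {d : measure_display} {T : measurableType d} {R : realType}.
Variable P : probability T R.

Definition L2 (f : T -> R) : Prop :=
  measurable_fun setT f /\ P.-integrable setT (fun x => ((f x) ^+ 2)%:E).

Definition ip (f g : T -> R) : R := Rintegral P setT (fun x => f x * g x).

Definition nrm2 (f : T -> R) : R := ip f f.

(* finite combination  sum_{1 <= k < n} c_k e_k  (eigenfunctions are indexed from 1) *)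
Definition partial (c : nat -> R) (e : nat -> T -> R) (n : nat) : T -> R :=
  fun x => \sum_(1 <= k < n) c k * e k x.

(* f belongs to H = closed span of {e_k, k >= 1} in L^2(D):
   f is in L^2 and is an L^2-limit of finite linear combinations of the e_k *)
Definition in_H (e : nat -> T -> R) (f : T -> R) : Prop :=
  L2 f /\ forall eps : R, 0 < eps ->
    exists (n : nat) (c : nat -> R), nrm2 (fun x => f x - partial c e n x) < eps.

Definition loss (fstar f : T -> R) : R :=
  Rintegral P setT (fun x => (f x - fstar x) ^+ 2).

(* g represents T^K_t(f) = sum_k (1 - e^{-lambda_k t}) <f,e_k> e_k,
   the series being understood as an L^2(D)-limit *)
Definition is_TK (lam : nat -> R) (e : nat -> T -> R) (t : R) (f g : T -> R) : Prop :=
  L2 g /\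
  (fun n => nrm2 (fun x => g x -
     partial (fun k => (1 - expR (- (lam k * t))) * ip f (e k)) e n x)) @ \oo --> 0.

End defs.

Definition tail_sum {R : realType} (u : nat -> R) (m : nat) : R :=
  limn (fun n => \sum_(m <= k < n) u k).

(* Main.v *)
Require Import Defs.
From mathcomp Require Import all_boot all_order all_algebra.
From mathcomp Require Import all_classical all_reals all_analysis.
From mathcomp Require Import ring lra.
Import Order.TTheory GRing.Theory Num.Theory.
Import numFieldNormedType.Exports.
Local Open Scope ring_scope.
Import measurable_realfun.
Lemma L2_lin {d : measure_display} {T : measurableType d} {R : realType}
  {P : probability T R} (f g : T -> R) (a b : R) :
  L2 P f -> L2 P g -> L2 P (fun x => a * f x + b * g x).
Proof.
move=> [mf intf] [mg intg]; split.
  by apply: measurable_funD; apply: measurable_funM => //; exact: measurable_cst.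
apply: (@le_integrable _ _ _ P setT _ _
  ((fun x => (2 * a ^+ 2)%:E * ((f x)^+2)%:E) \+ (fun x => (2 * b ^+ 2)%:E * ((g x)^+2)%:E))%E).
idtac.
- by [].
- apply/measurable_EFinP; apply: measurable_funX.
  by apply: measurable_funD; apply: measurable_funM => //; exact: measurable_cst.
- move=> x _ /=. rewrite lee_fin.
  have h1 : 0 <= 2 * a ^+ 2 * f x ^+ 2 + 2 * b ^+ 2 * g x ^+ 2.
    by have := sqr_ge0 a; have := sqr_ge0 b; have := sqr_ge0 (f x); have := sqr_ge0 (g x); nra.
  rewrite (ger0_norm h1) ger0_norm ?sqr_ge0 //.
  have := sqr_ge0 (a * f x - b * g x); rewrite !expr2; nra.
- by apply: integrableD => //; apply: integrableZl.
Qed.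

Lemma L2_0 {d : measure_display} {T : measurableType d} {R : realType}
  {P : probability T R} : L2 P (fun _ => 0).
Proof.
split; first exact: measurable_cst.
apply: eq_integrable (integrable0 P setT) => //= x _.
by rewrite expr0n.
Qed.

Lemma L2_sum {d : measure_display} {T : measurableType d} {R : realType}
  {P : probability T R} (s : seq nat) (F : nat -> T -> R) :
  (forall i, i \in s -> L2 P (F i)) -> L2 P (fun x => \sum_(i <- s) F i x).
Proof.
elim: s => [_|i s IH H].
  under eq_fun do rewrite big_nil; exact: L2_0.
under eq_fun do rewrite big_cons.
have H1 : L2 P (F i) := H i (mem_head _ _).
have H2 : L2 P (fun x => \sum_(j <- s) F j x).
  by apply: IH => j hj; apply: H; rewrite in_cons hj orbT.
have := L2_lin _ _ 1 1 H1 H2.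
by under eq_fun do rewrite !mul1r.
Qed.

Lemma L2_mul {d : measure_display} {T : measurableType d} {R : realType}
  {P : probability T R} {f g : T -> R} :
  L2 P f -> L2 P g -> P.-integrable setT (EFin \o (fun x => f x * g x)).
Proof.
move=> [mf intf] [mg intg].
apply: (@le_integrable _ _ _ P setT _ _
  ((fun x => ((f x)^+2)%:E) \+ (fun x => ((g x)^+2)%:E))%E).
- by [].
- by apply/measurable_EFinP; apply: measurable_funM.
- move=> x _ /=; rewrite lee_fin.
  have h1 : 0 <= f x ^+ 2 + g x ^+ 2.
    by have := sqr_ge0 (f x); have := sqr_ge0 (g x); nra.
  rewrite (ger0_norm h1).
  have h2 := sqr_ge0 (f x - g x); have h3 := sqr_ge0 (f x + g x).
  rewrite ler_norml; apply/andP; split; rewrite !expr2 in h1 h2 h3 *; nra.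
- exact: integrableD.
Qed.

Lemma ipC {d : measure_display} {T : measurableType d} {R : realType}
  (P : probability T R) (f g : T -> R) : ip P f g = ip P g f.
Proof. by rewrite /ip; apply: eq_Rintegral => x _; rewrite mulrC. Qed.

Lemma ip_lin {d : measure_display} {T : measurableType d} {R : realType}
  {P : probability T R} (f g h : T -> R) (a b : R) :
  L2 P f -> L2 P g -> L2 P h ->
  ip P (fun x => a * f x + b * g x) h = a * ip P f h + b * ip P g h.
Proof.
move=> Lf Lg Lh; rewrite /ip.
rewrite (_ : (fun x => (a * f x + b * g x) * h x) =
   (fun x => a * (f x * h x) + b * (g x * h x))); last first.
  by apply/funext => x; rewrite mulrDl !mulrA.
rewrite RintegralD //; last first.
- have := integrableZl measurableT b (L2_mul Lg Lh).
  by apply: eq_integrable => // x _ /=; rewrite EFinM.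
- have := integrableZl measurableT a (L2_mul Lf Lh).
  by apply: eq_integrable => // x _ /=; rewrite EFinM.
by rewrite !RintegralZl //; exact: L2_mul.
Qed.

Lemma ip0 {d : measure_display} {T : measurableType d} {R : realType}
  (P : probability T R) (h : T -> R) : ip P (fun _ => 0) h = 0.
Proof.
rewrite /ip (_ : (fun x => 0 * h x) = (fun _ => 0)); last first.
  by apply/funext => x; rewrite mul0r.
by rewrite Rintegral_cst // mul0r.
Qed.

Lemma ip_sum {d : measure_display} {T : measurableType d} {R : realType}
  {P : probability T R} (s : seq nat) (F : nat -> T -> R) (h : T -> R) :
  (forall i, i \in s -> L2 P (F i)) -> L2 P h ->
  ip P (fun x => \sum_(i <- s) F i x) h = \sum_(i <- s) ip P (F i) h.
Proof.
elim: s => [_ Lh|i s IH H Lh].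
  rewrite big_nil; under eq_fun do rewrite big_nil; exact: ip0.
under eq_fun do rewrite big_cons.
have H1 : L2 P (F i) := H i (mem_head _ _).
have H2' : forall j, j \in s -> L2 P (F j).
  by move=> j hj; apply: H; rewrite in_cons hj orbT.
have H2 := L2_sum _ _ H2'.
have := ip_lin _ _ _ 1 1 H1 H2 Lh.
under eq_fun do rewrite !mul1r.
by move=> ->; rewrite big_cons !mul1r IH.
Qed.

Lemma nrm2_ge0 {d : measure_display} {T : measurableType d} {R : realType}
  (P : probability T R) (f : T -> R) : 0 <= nrm2 P f.
Proof. by apply: Rintegral_ge0 => x _; rewrite -expr2 sqr_ge0. Qed.




Lemma L2D {d : measure_display} {T : measurableType d} {R : realType}
  {P : probability T R} {f g : T -> R} :
  L2 P f -> L2 P g -> L2 P (fun x => f x + g x).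
Proof. move=> Lf Lg; have := L2_lin _ _ 1 1 Lf Lg; by under eq_fun do rewrite !mul1r. Qed.

Lemma L2B {d : measure_display} {T : measurableType d} {R : realType}
  {P : probability T R} {f g : T -> R} :
  L2 P f -> L2 P g -> L2 P (fun x => f x - g x).
Proof. move=> Lf Lg; have := L2_lin _ _ 1 (-1) Lf Lg; by under eq_fun do rewrite mul1r mulN1r. Qed.

Lemma L2Z {d : measure_display} {T : measurableType d} {R : realType}
  {P : probability T R} {f : T -> R} (a : R) :
  L2 P f -> L2 P (fun x => a * f x).
Proof. move=> Lf; have := L2_lin _ _ a 0 Lf Lf; by under eq_fun do rewrite mul0r addr0. Qed.

Lemma ipD {d : measure_display} {T : measurableType d} {R : realType}
  {P : probability T R} {f g h : T -> R} :
  L2 P f -> L2 P g -> L2 P h -> ip P (fun x => f x + g x) h = ip P f h + ip P g h.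
Proof. move=> Lf Lg Lh; have := ip_lin _ _ _ 1 1 Lf Lg Lh; rewrite !mul1r; by under eq_fun do rewrite !mul1r. Qed.

Lemma ipB {d : measure_display} {T : measurableType d} {R : realType}
  {P : probability T R} {f g h : T -> R} :
  L2 P f -> L2 P g -> L2 P h -> ip P (fun x => f x - g x) h = ip P f h - ip P g h.
Proof. move=> Lf Lg Lh; have := ip_lin _ _ _ 1 (-1) Lf Lg Lh; rewrite mul1r mulN1r; by under eq_fun do rewrite mul1r mulN1r. Qed.

Lemma ipZ {d : measure_display} {T : measurableType d} {R : realType}
  {P : probability T R} {f h : T -> R} (a : R) :
  L2 P f -> L2 P h -> ip P (fun x => a * f x) h = a * ip P f h.
Proof. move=> Lf Lh; have := ip_lin _ _ _ a 0 Lf Lf Lh; rewrite mul0r addr0; by under eq_fun do rewrite mul0r addr0. Qed.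

Lemma nrm2D {d : measure_display} {T : measurableType d} {R : realType}
  {P : probability T R} {f g : T -> R} :
  L2 P f -> L2 P g -> nrm2 P (fun x => f x + g x) = nrm2 P f + 2 * ip P f g + nrm2 P g.
Proof.
move=> Lf Lg; rewrite /nrm2 ipD //; last exact: L2D.
rewrite (ipC P f) (ipC P g) !ipD // (ipC P f g); ring.
Qed.

Lemma nrm2B {d : measure_display} {T : measurableType d} {R : realType}
  {P : probability T R} {f g : T -> R} :
  L2 P f -> L2 P g -> nrm2 P (fun x => f x - g x) = nrm2 P f - 2 * ip P f g + nrm2 P g.
Proof.
move=> Lf Lg; rewrite /nrm2 ipB //; last exact: L2B.
rewrite (ipC P f) (ipC P g) !ipB // (ipC P f g); ring.
Qed.

Lemma L2_partial {d : measure_display} {T : measurableType d} {R : realType}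
  {P : probability T R} (e : nat -> T -> R) (he : forall k, (1 <= k)%N -> L2 P (e k))
  (c : nat -> R) (n : nat) : L2 P (partial c e n).
Proof.
apply: (L2_sum _ (fun k x => c k * e k x)) => k; rewrite mem_index_iota => /andP[hk _].
exact/L2Z/he.
Qed.

Lemma ip_partial_r {d : measure_display} {T : measurableType d} {R : realType}
  {P : probability T R} (e : nat -> T -> R) (he : forall k, (1 <= k)%N -> L2 P (e k))
  (w : T -> R) (c : nat -> R) (n : nat) : L2 P w ->
  ip P w (partial c e n) = \sum_(1 <= k < n) c k * ip P w (e k).
Proof.
move=> Lw; rewrite ipC /partial ip_sum //; last first.
  by move=> k; rewrite mem_index_iota => /andP[hk _]; exact/L2Z/he.
rewrite big_seq_cond [RHS]big_seq_cond; apply: eq_bigr => k.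
rewrite andbT mem_index_iota => /andP[hk _].
by rewrite [ip P w (e k)]ipC ipZ //; apply: he.
Qed.

Lemma sum_delta {R : realType} (c : nat -> R) (n j : nat) : (1 <= j)%N ->
  \sum_(1 <= k < n) c k * (k == j)%:R = if (j < n)%N then c j else 0.
Proof.
move=> hj; case: ifP => hjn.
  rewrite (bigD1_seq j) ?iota_uniq ?mem_index_iota ?hj ?hjn //= eqxx mulr1.
  rewrite big1 ?addr0 // => k /negPf ->; by rewrite mulr0.
rewrite big_seq big1 // => k; rewrite mem_index_iota => /andP[_ hk].
have -> : (k == j) = false by apply/negP => /eqP Ekj; rewrite -Ekj hk in hjn.
by rewrite mulr0.
Qed.

Lemma ip_partial_e {d : measure_display} {T : measurableType d} {R : realType}
  {P : probability T R} (e : nat -> T -> R) (he : forall k, (1 <= k)%N -> L2 P (e k))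
  (horth : forall i j, (1 <= i)%N -> (1 <= j)%N -> ip P (e i) (e j) = (i == j)%:R)
  (c : nat -> R) (n j : nat) : (1 <= j)%N ->
  ip P (partial c e n) (e j) = if (j < n)%N then c j else 0.
Proof.
move=> hj; rewrite ipC (ip_partial_r _ he _ _ _ (he j hj)) -sum_delta //.
rewrite big_seq_cond [RHS]big_seq_cond; apply: eq_bigr => k.
rewrite andbT mem_index_iota => /andP[hk _].
by rewrite ipC horth.
Qed.

Lemma nrm2_partial {d : measure_display} {T : measurableType d} {R : realType}
  {P : probability T R} (e : nat -> T -> R) (he : forall k, (1 <= k)%N -> L2 P (e k))
  (horth : forall i j, (1 <= i)%N -> (1 <= j)%N -> ip P (e i) (e j) = (i == j)%:R)
  (c : nat -> R) (n : nat) :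
  nrm2 P (partial c e n) = \sum_(1 <= k < n) c k ^+ 2.
Proof.
rewrite /nrm2 ip_partial_r //; last exact: L2_partial.
rewrite big_seq_cond [RHS]big_seq_cond; apply: eq_bigr => k.
rewrite andbT mem_index_iota => /andP[hk hkn].
by rewrite (ip_partial_e _ he horth) // hkn expr2.
Qed.

Lemma nrm2_comb {d : measure_display} {T : measurableType d} {R : realType}
  {P : probability T R} {u w : T -> R} (s : R) :
  L2 P u -> L2 P w ->
  nrm2 P (fun x => u x + s * w x) = nrm2 P u + 2 * s * ip P u w + s ^+ 2 * nrm2 P w.
Proof.
move=> Lu Lw; rewrite nrm2D //; last exact: L2Z.
rewrite /nrm2 (ipC P u) !ipZ //; last exact: L2Z.
rewrite (ipC P w (fun x => s * w x)) ipZ // (ipC P w u); ring.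
Qed.

Lemma null_ip {d : measure_display} {T : measurableType d} {R : realType}
  {P : probability T R} {x y : T -> R} :
  L2 P x -> L2 P y -> nrm2 P y = 0 -> ip P x y = 0.
Proof.
move=> Lx Ly Ny.
have H s : 0 <= nrm2 P x + 2 * s * ip P x y.
  by have := nrm2_ge0 P (fun z => x z + s * y z); rewrite nrm2_comb // Ny mulr0 addr0.
apply/eqP; apply/negP => /negP hI.
have := H (- (nrm2 P x + 1) / (2 * ip P x y)).
have -> : 2 * (- (nrm2 P x + 1) / (2 * ip P x y)) * ip P x y = - (nrm2 P x + 1).
  by field; rewrite hI.
lra.
Qed.

Lemma bessel {d : measure_display} {T : measurableType d} {R : realType}
  {P : probability T R} (e : nat -> T -> R) (he : forall k, (1 <= k)%N -> L2 P (e k))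
  (horth : forall i j, (1 <= i)%N -> (1 <= j)%N -> ip P (e i) (e j) = (i == j)%:R)
  (w : T -> R) (n : nat) : L2 P w ->
  \sum_(1 <= k < n) ip P w (e k) ^+ 2 <= nrm2 P w.
Proof.
move=> Lw.
have Lp := L2_partial e he (fun k => ip P w (e k)) n.
have := nrm2_ge0 P (fun x => w x - partial (fun k => ip P w (e k)) e n x).
rewrite nrm2B // (nrm2_partial e he horth) (ip_partial_r e he) //.
under [X in _ - 2 * X]eq_bigr do rewrite -expr2.
lra.
Qed.

Lemma split_ineq {d : measure_display} {T : measurableType d} {R : realType}
  {P : probability T R} {u w : T -> R} (eps : R) : 0 < eps ->
  L2 P u -> L2 P w ->
  eps * nrm2 P (fun x => u x + w x) <= (1 + eps) * nrm2 P u + eps * (1 + eps) * nrm2 P w.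
Proof.
move=> he Lu Lw.
have := nrm2_ge0 P (fun x => u x + (- eps) * w x).
rewrite nrm2_comb // nrm2D // => h.
have := nrm2_ge0 P u; have := nrm2_ge0 P w => h1 h2.
rewrite !expr2 in h; nra.
Qed.

Lemma term_le {R : realType} (q qK a b : R) : 0 <= q -> q <= qK -> qK <= 1 ->
  ((1 - q) * a - b) ^+ 2 <= (a - b) ^+ 2 + qK / (2 - qK) * b ^+ 2.
Proof.
move=> hq hqK hK1.
have h2q : 0 < 2 - q by lra.
have h2K : 0 < 2 - qK by lra.
have key : q / (2 - q) * b ^+ 2 - (((1 - q) * a - b) ^+ 2 - (a - b) ^+ 2)
   = q * ((2 - q) * a - b) ^+ 2 / (2 - q).
  by field; rewrite gt_eqF.
have h1 : 0 <= q * ((2 - q) * a - b) ^+ 2 / (2 - q).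
  by apply: divr_ge0; [apply: mulr_ge0 => //; exact: sqr_ge0 | exact: ltW].
have key2 : qK / (2 - qK) - q / (2 - q) = 2 * (qK - q) / ((2 - q) * (2 - qK)).
  by field; rewrite !gt_eqF.
have h3 : 0 <= 2 * (qK - q) / ((2 - q) * (2 - qK)).
  apply: divr_ge0; first by apply: mulr_ge0 => //; rewrite subr_ge0.
  by apply: ltW; apply: mulr_gt0.
have h4 : q / (2 - q) * b ^+ 2 <= qK / (2 - qK) * b ^+ 2.
  by apply: ler_wpM2r; rewrite ?sqr_ge0 // -subr_ge0 key2.
lra.
Qed.

Lemma conclude_eps {R : realType} (X Y : R) :
  (forall eps : R, 0 < eps -> X <= (1 + eps) * Y) -> X <= Y.
Proof.
move=> H; apply/ler_addgt0Pr => r hr.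
case: (lerP Y 0) => hY.
  have := H 1 ltr01; lra.
have := H (r / Y) (divr_gt0 hr hY).
have -> : (1 + r / Y) * Y = Y + r by field; rewrite gt_eqF.
by [].
Qed.


Lemma sumsq_ge0 {R : realType} (F : nat -> R) (m n : nat) :
  0 <= \sum_(m <= k < n) F k ^+ 2.
Proof. by apply: sumr_ge0 => k _; exact: sqr_ge0. Qed.

Lemma sumsq_nd {R : realType} (F : nat -> R) (m0 : nat) :
  nondecreasing_seq (fun n => \sum_(m0 <= k < n) F k ^+ 2).
Proof.
move=> m n hmn /=.
case: (leqP m0 m) => hm.
  rewrite (@big_cat_nat _ _ _ m m0 n _ _ hm hmn) /=.
    rewrite lerDl. exact: sumsq_ge0.
rewrite [X in X <= _]big_geq. exact: sumsq_ge0. exact: ltnW.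
Qed.

Lemma sumsq_le {R : realType} (F : nat -> R) (m0 n : nat) : (1 <= m0)%N ->
  \sum_(m0 <= k < n) F k ^+ 2 <= \sum_(1 <= k < n) F k ^+ 2.
Proof.
move=> h1; case: (leqP m0 n) => hn.
  rewrite [X in _ <= X](@big_cat_nat _ _ _ m0 1 n _ _ h1 hn) /= lerDr.
  exact: sumsq_ge0.
rewrite [X in X <= _]big_geq; first exact: sumsq_ge0.
exact: ltnW.
Qed.

Local Open Scope classical_set_scope.

Theorem lemma6p2 (d : measure_display) (T : measurableType d) (R : realType)
  (P : probability T R) (lam : nat -> R) (e : nat -> T -> R)
  (fstar : T -> R) (K : nat)
  (he : forall k, (1 <= k)%N -> L2 P (e k))
  (horth : forall i j, (1 <= i)%N -> (1 <= j)%N -> ip P (e i) (e j) = (i == j)%:R)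
  (hlam0 : forall k, (1 <= k)%N -> 0 <= lam k)
  (hlam_mono : forall i j, (1 <= i)%N -> (i <= j)%N -> lam j <= lam i)
  (hfstar : in_H P e fstar)
  (hK : (0 < K)%N)
  (hgt1 : forall k, (K < k)%N -> ip P fstar (e k) = 0)
  (hgt2 : forall k, (1 <= k <= K)%N -> lam k = 0 -> ip P fstar (e k) = 0)
  (fteacher : T -> R) (hteach : in_H P e fteacher)
  (t : R) (ht : 0 < t) (S : nat) (hS : (K <= S)%N)
  (fT : T -> R) (hfT : is_TK P lam e t fteacher fT) :
  loss P fstar fT <=
    loss P fstar fteacher
    + expR (- (lam K * t)) / (2 - expR (- (lam K * t))) * nrm2 P fstar
    - (1 - lam S.+1 ^+ 2 * t ^+ 2) * tail_sum (fun k => ip P fteacher (e k) ^+ 2) S.+1.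
Proof.
have [Lfs Hfs] := hfstar.
have [Lft _] := hteach.
have [LfT cvgT] := hfT.
pose v := partial (fun k => ip P fstar (e k)) e K.+1.
have Lv : L2 P v := L2_partial e he _ _.
have hve k : (1 <= k)%N -> ip P v (e k) = ip P fstar (e k).
  move=> hk; rewrite /v (ip_partial_e e he horth) //; case: ifP => // hkK.
  by rewrite hgt1 //; rewrite ltnS in hkK; rewrite ltnNge hkK.
have Lfv : L2 P (fun x => fstar x - v x) := L2B Lfs Lv.
have hort k : (1 <= k)%N -> ip P (fun x => fstar x - v x) (e k) = 0.
  by move=> hk; rewrite (ipB Lfs Lv (he k hk)) hve // subrr.
have hortp c n : ip P (fun x => fstar x - v x) (partial c e n) = 0.
  rewrite (ip_partial_r e he _ c n Lfv) big_nat big1 // => k /andP[hk _].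
  by rewrite hort ?mulr0.
have N0 : nrm2 P (fun x => fstar x - v x) = 0.
  apply/le_anti; rewrite nrm2_ge0 andbT.
  apply/ler_addgt0Pr => eps heps; rewrite add0r.
  have [n [c hc]] := Hfs eps heps.
  apply: (le_trans _ (ltW hc)).
  have Lp := L2_partial e he c n.
  have -> : (fun x => fstar x - partial c e n x) =
      (fun x => (fstar x - v x) + (v x - partial c e n x)).
    by apply/funext => x; rewrite addrA subrK.
  rewrite (nrm2D Lfv (L2B Lv Lp)).
  have -> : ip P (fun x => fstar x - v x) (fun x => v x - partial c e n x) = 0.
    by rewrite ipC (ipB Lv Lp Lfv) ipC hortp ipC hortp subrr.
  have := nrm2_ge0 P (fun x => v x - partial c e n x); lra.
have hnull x : L2 P x -> ip P x (fun z => fstar z - v z) = 0.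
  by move=> Lx; exact: null_ip Lx Lfv N0.
have hloss f : L2 P f -> loss P fstar f = nrm2 P (fun x => f x - v x).
  move=> Lf.
  have Lfv' : L2 P (fun x => f x - v x) := L2B Lf Lv.
  transitivity (nrm2 P (fun x => (f x - v x) - (fstar x - v x))).
    rewrite /loss /nrm2 /ip; apply: eq_Rintegral => x _.
    have -> : f x - v x - (fstar x - v x) = f x - fstar x by ring.
    by rewrite expr2.
  by rewrite nrm2B // hnull // N0 mulr0 subr0 addr0.
have hnfs : nrm2 P fstar = \sum_(1 <= k < K.+1) ip P fstar (e k) ^+ 2.
  transitivity (nrm2 P (fun x => v x + (fstar x - v x))).
    by congr (nrm2 P _); apply/funext => x; rewrite addrC subrK.
  by rewrite nrm2D // hnull // N0 mulr0 !addr0 /v nrm2_partial.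
have hvn n : (K.+1 <= n)%N -> v = partial (fun k => ip P fstar (e k)) e n.
  move=> hn; apply/funext => x; rewrite /v /partial.
  rewrite [RHS](@big_cat_nat _ _ _ K.+1 1 n _ _ (_ : (1 <= K.+1)%N) hn) //=.
  rewrite [X in _ = _ + X](_ : _ = 0) ?addr0 //.
  rewrite big_nat big1 // => k /andP[hk _].
  by rewrite hgt1 ?mul0r.
pose q k := expR (- (lam k * t)).
have hq0 k : 0 <= q k by apply/ltW/expR_gt0.
have hq1 k : (1 <= k)%N -> q k <= 1.
  move=> hk; rewrite /q expR_le1 oppr_le0; apply: mulr_ge0; [exact: hlam0|exact: ltW].
have hqK k : (1 <= k)%N -> (k <= K)%N -> q k <= q K.
  move=> hk hkK; rewrite /q ler_expR lerN2; apply: ler_wpM2r; first exact: ltW.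
  exact: hlam_mono.
have hq1t k : 1 - q k <= lam k * t.
  by have := expR_ge1Dx (- (lam k * t)); rewrite /q; lra.
pose C := expR (- (lam K * t)) / (2 - expR (- (lam K * t))).
pose cc := 1 - lam S.+1 ^+ 2 * t ^+ 2.
pose a k := ip P fteacher (e k).
pose gn n := partial (fun k => (1 - expR (- (lam k * t))) * ip P fteacher (e k)) e n.
pose s n := \sum_(S.+1 <= k < n) a k ^+ 2.
have step n : (S.+1 <= n)%N ->
  nrm2 P (fun x => gn n x - v x) <= nrm2 P (fun x => fteacher x - v x) + C * nrm2 P fstar - cc * s n.
  move=> hSn.
  have hKn : (K.+1 <= n)%N by apply: leq_trans hSn; rewrite ltnS.
  rewrite {1}(hvn n hKn).
  have -> : (fun x => gn n x - partial (fun k => ip P fstar (e k)) e n x) =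
     partial (fun k => (1 - q k) * a k - ip P fstar (e k)) e n.
    apply/funext => x; rewrite /gn /partial -sumrB; apply: eq_bigr => k _.
    by rewrite [RHS]mulrBl.
  rewrite (nrm2_partial e he horth).
  have hb := bessel e he horth (fun x => fteacher x - v x) n (L2B Lft Lv).
  have Eb : \sum_(1 <= k < n) ip P (fun x => fteacher x - v x) (e k) ^+ 2 =
            \sum_(1 <= k < n) (a k - ip P fstar (e k)) ^+ 2.
    rewrite big_nat [RHS]big_nat; apply: eq_bigr => k /andP[hk _].
    by rewrite (ipB Lft Lv (he k hk)) hve.
  rewrite Eb in hb.
  apply: (@le_trans _ _ (\sum_(1 <= k < n) (a k - ip P fstar (e k)) ^+ 2
      + C * nrm2 P fstar - cc * s n)); last lra.
  rewrite hnfs /s.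
  have E2 : \sum_(S.+1 <= k < n) a k ^+ 2 =
      \sum_(1 <= k < n) (if (S < k)%N then a k ^+ 2 else 0).
    rewrite (@big_cat_nat _ _ _ S.+1 1 n _ _ (_ : (1 <= S.+1)%N) hSn) //=.
    rewrite [X in _ = X + _](_ : _ = 0) ?add0r; last first.
      by rewrite big_nat big1 // => k /andP[_ hk]; rewrite ltnNge -ltnS hk.
    by rewrite big_nat [RHS]big_nat; apply: eq_bigr => k /andP[hk _]; rewrite hk.
  have E1 : \sum_(1 <= k < K.+1) ip P fstar (e k) ^+ 2 =
      \sum_(1 <= k < n) (if (k < K.+1)%N then ip P fstar (e k) ^+ 2 else 0).
    rewrite (@big_cat_nat _ _ _ K.+1 1 n _ _ (_ : (1 <= K.+1)%N) hKn) //=.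
    rewrite [X in _ = _ + X](_ : _ = 0) ?addr0; last first.
      by rewrite big_nat big1 // => k /andP[hk _]; rewrite ltnNge hk.
    by rewrite big_nat [RHS]big_nat; apply: eq_bigr => k /andP[_ hk]; rewrite hk.
  rewrite E1 E2 !mulr_sumr -big_split -sumrB /=.
  apply: ler_sum_nat => k /andP[hk hkn].
  case: (ltnP k K.+1) => hkK.
    have hSk : (S < k)%N = false by apply/negbTE; rewrite -leqNgt; apply: leq_trans hS; rewrite -ltnS.
    rewrite hSk mulr0 subr0.
    apply: term_le; [exact: hq0| |].
      by apply: hqK; rewrite // -ltnS.
    exact: hq1.
  have hb0 : ip P fstar (e k) = 0 by apply: hgt1.
  rewrite hb0 mulr0 addr0 !subr0.
  have h01 : 0 <= 1 - q k by have := hq1 k hk; lra.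
  have h11 : 1 - q k <= 1 by have := hq0 k; lra.
  case: (ltnP S k) => hSk.
    have hl : lam k * t <= lam S.+1 * t.
      by apply: ler_wpM2r; [exact: ltW | exact: hlam_mono].
    have hlt := hq1t k.
    have h2 : (1 - q k) ^+ 2 <= (lam S.+1 * t) ^+ 2.
      by rewrite !expr2; nra.
    have -> : a k ^+ 2 - cc * a k ^+ 2 = (lam S.+1 * t) ^+ 2 * a k ^+ 2.
      by rewrite /cc; ring.
    by rewrite exprMn; apply: ler_wpM2r => //; exact: sqr_ge0.
  rewrite mulr0 subr0 exprMn.
  have h3 : (1 - q k) ^+ 2 <= 1 by rewrite !expr2; nra.
  have := sqr_ge0 (a k); move: h3; set u := (1 - q k) ^+ 2; set w := a k ^+ 2; nra.
have Lgn n : L2 P (gn n) := L2_partial e he _ n.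
have sND : nondecreasing_seq s := sumsq_nd a S.+1.
have sub : has_ubound (range s).
  exists (nrm2 P fteacher) => _ [n _ <-].
  rewrite /s; have h1 := sumsq_le a S.+1 n (ltn0Sn S); have h2 := bessel e he horth fteacher n Lft; exact: le_trans h1 h2.
have scvg : cvgn s := nondecreasing_is_cvgn sND sub.
rewrite (hloss fT LfT) (hloss fteacher Lft).
have -> : tail_sum (fun k => ip P fteacher (e k) ^+ 2) S.+1 = limn s by [].
rewrite -/C -/cc.
apply: conclude_eps => eps heps.
set X := nrm2 P (fun x => fT x - v x).
set Y := nrm2 P (fun x => fteacher x - v x) + C * nrm2 P fstar - cc * limn s.
suff : eps * X <= eps * ((1 + eps) * Y) by rewrite ler_pM2l.
pose W := nrm2 P (fun x => fteacher x - v x).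
pose u n := (1 + eps) * nrm2 P (fun x => fT x - gn n x)
   + eps * (1 + eps) * (W + C * nrm2 P fstar - cc * s n).
have cu : u n @[n --> \oo] --> (1 + eps) * 0 + eps * (1 + eps) * (W + C * nrm2 P fstar - cc * limn s).
  apply: cvgD.
    by apply: cvgMl_tmp; exact: cvgT.
  apply: cvgMl_tmp; apply: cvgB; first exact: cvg_cst.
  by apply: cvgMl_tmp; exact: scvg.
have H : \forall n \near \oo, eps * X <= u n.
  exists S.+1 => // n /= hn; rewrite /X.
  have -> : (fun x => fT x - v x) = (fun x => (fT x - gn n x) + (gn n x - v x)).
    by apply/funext => x; rewrite addrA subrK.
  have hsp := split_ineq eps heps (L2B LfT (Lgn n)) (L2B (Lgn n) Lv); apply: (le_trans hsp).
  rewrite /u lerD2l; apply: ler_wpM2l; first by apply: mulr_ge0; lra.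
  exact: step.
have := limr_ge (cvgP _ cu) H.
rewrite (cvg_lim (@Rhausdorff R) cu) mulr0 add0r.
by rewrite mulrA; apply; exact: eventually_filter.
Qed.
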